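(* Let $n\ge1$, $0\le m$, and let $T\in\mathbb R[x,u_0,\dots,u_n]$ satisfy $T(\mathcal P_n)\subset\mathcal P_m$. Decompose $T=\sum_{\ell,k}T_{\ell,k}$ where $T_{\ell,k}$ is the sum of those monomial terms $C\,x^ju_{i_1}\cdots u_{i_\ell}$ of $T$ that have degree $\ell$ in the $u$-variables and weight $j+n\ell-(i_1+\cdots+i_\ell)=k$. Then each $T_{\ell,k}$ also satisfies $T_{\ell,k}(\mathcal P_n)\subset\mathcal P_m$.
   Context: Elements $P\in\mathbb R[x,u_0,\dots,u_n]$ act on smooth $f$ by $P[f](x)=P(x,f(x),f'(x),\dots,f^{(n)}(x))$. $\mathcal P_s$ is the space of real polynomials in $x$ of degree at most $s$. The weight is defined on monomials by $\operatorname{wt}(x)=1$, $\operatorname{wt}(u_i)=n-i$, extended multiplicatively-additively. *)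

(* Defs.v *)
From HB Require Import structures.
From mathcomp Require Import all_boot all_order all_algebra.
From mathcomp Require Import reals.
From mathcomp Require Import mpoly.
Set Implicit Arguments. Unset Strict Implicit. Unset Printing Implicit Defensive.
Import Order.TTheory GRing.Theory Num.Theory.
Local Open Scope ring_scope.

(* Variables of {mpoly R[n.+2]}: index 0 is x, index i.+1 is u_i (i = 0..n). *)

Definition act (R : realType) (n : nat) (P : {mpoly R[n.+2]}) (f : {poly R}) : R -> R :=
  fun x => P.@[fun i : 'I_n.+2 => if (i : nat) == 0%N then x else (f^`(i.-1)).[x]].

Definition inPs (R : realType) (s : nat) (g : R -> R) : Prop :=
  exists q : {poly R}, (size q <= s.+1)%N /\ forall x, g x = q.[x].

Definition udeg (n : nat) (m : 'X_{1..n.+2}) : nat :=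
  (\sum_(i < n.+2 | (i : nat) != 0%N) m i)%N.

Definition wt (n : nat) (m : 'X_{1..n.+2}) : nat :=
  (m ord0 + \sum_(i < n.+2 | (i : nat) != 0%N) (n - (i.-1)) * m i)%N.

Definition Tpart (R : realType) (n : nat) (T : {mpoly R[n.+2]}) (l k : nat)
  : {mpoly R[n.+2]} :=
  \sum_(m <- msupp T | (udeg m == l) && (wt m == k)) T@_m *: 'X_[m].

(* Main.v *)
Require Import Defs.
From HB Require Import structures.
From mathcomp Require Import all_boot all_order all_algebra.
From mathcomp Require Import reals.
From mathcomp Require Import mpoly.
Import Order.TTheory GRing.Theory Num.Theory.
Local Open Scope ring_scope.

Section S.
Variable R : realType.

Lemma poly_zero_nz (p : {poly R}) : (forall t, t != 0 -> p.[t] = 0) -> p = 0.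
Proof.
move=> H; apply: (@roots_geq_poly_eq0 _ p [seq (i.+1)%:R | i <- iota 0 (size p)]).
- apply/allP => x /mapP [i _ ->]; rewrite /root H //.
  by rewrite pnatr_eq0.
- rewrite map_inj_uniq ?iota_uniq // => a b /eqP; rewrite eqr_nat => /eqP [].
  done.
- by rewrite size_map size_iota.
Qed.

Lemma poly_eq_fun (p q : {poly R}) : (forall x, p.[x] = q.[x]) -> p = q.
Proof.
move=> H; apply/eqP; rewrite -subr_eq0; apply/eqP; apply: poly_zero_nz => t _.
by rewrite hornerD hornerN H subrr.
Qed.

Lemma inPs_size s (p : {poly R}) : inPs s (fun x => p.[x]) -> (size p <= s.+1)%N.
Proof. by case=> q [Hq /poly_eq_fun ->]. Qed.

Lemma derivn_compZ (c : R) (f : {poly R}) j :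
  (f \Po (c *: 'X))^`(j) = c ^+ j *: (f^`(j) \Po (c *: 'X)).
Proof.
elim: j => [|j IH]; first by rewrite expr0 scale1r.
rewrite !derivnS IH derivZ deriv_comp derivZ derivX exprSr -scalerA; congr (_ *: _).
by rewrite -scalerAr mulr1.
Qed.

Variable n : nat.

Definition V (f : {poly R}) (i : 'I_n.+2) : {poly R} :=
  if (i : nat) == 0%N then 'X else f^`(i.-1).
Definition Mp (f : {poly R}) (mm : 'X_{1..n.+2}) : {poly R} :=
  \prod_(i < n.+2) V f i ^+ mm i.

Lemma act_eval (P : {mpoly R[n.+2]}) f x : act P f x = P.@[fun i => (V f i).[x]].
Proof.
apply: meval_eq => i; rewrite /V; case: ifP => //; by rewrite hornerX.
Qed.

Lemma actX (mm : 'X_{1..n.+2}) f x : act 'X_[mm] f x = (Mp f mm).[x].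
Proof. by rewrite act_eval mevalX /Mp horner_prod; apply: eq_bigr => i _; rewrite horner_exp. Qed.

Lemma actE (P : {mpoly R[n.+2]}) f x :
  act P f x = (\sum_(mm <- msupp P) P@_mm *: Mp f mm).[x].
Proof.
rewrite {1}(mpolyE P) act_eval raddf_sum /= horner_sum; apply: eq_bigr => mm _.
by rewrite mevalZ hornerZ -act_eval actX.
Qed.

Lemma act_Tpart (T : {mpoly R[n.+2]}) l k f x :
  act (Tpart T l k) f x =
  (\sum_(mm <- msupp T | (udeg mm == l) && (wt mm == k)) T@_mm *: Mp f mm).[x].
Proof.
rewrite act_eval /Tpart raddf_sum /= horner_sum; apply: eq_bigr => mm _.
by rewrite mevalZ hornerZ -act_eval actX.
Qed.

Lemma divmod_eq (N a b c d : nat) : (b < N)%N -> (d < N)%N ->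
  (N * a + b == N * c + d)%N = (a == c) && (b == d).
Proof.
move=> hb hd; apply/eqP/andP => [E|[/eqP -> /eqP ->]] //.
have N0 : (0 < N)%N by case: N hb {E hd}.
have h1 := congr1 (fun z => z %/ N)%N E.
have h2 := congr1 (fun z => z %% N)%N E.
rewrite /= ![(N * _)%N]mulnC !divnMDl // !divn_small // !addn0 in h1.
rewrite /= ![(N * _)%N]mulnC !modnMDl !modn_small // in h2.
by rewrite h1 h2.
Qed.


Definition sig (t : R) (p : {poly R}) := p \Po (t^-1 *: 'X).
Definition gsc (t : R) (N : nat) (f : {poly R}) := t ^+ N *: (t ^+ n *: sig t f).

Lemma V_g t N f (i : 'I_n.+2) : t != 0 ->
  V (gsc t N f) i = t ^+ (if (i : nat) == 0%N then 1 else N + (n - i.-1))%N *: sig t (V f i).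
Proof.
move=> ht; rewrite /V; case: ifP => _.
  by rewrite /sig comp_polyX scalerA expr1 mulfV // scale1r.
have hj : (i.-1 <= n)%N by case: i => [[|j]] //= /ltnSE.
rewrite /gsc !derivnZ /sig derivn_compZ !scalerA; congr (_ *: _).
rewrite exprD -mulrA; congr (_ * _).
rewrite -{1}(subnK hj) exprD exprVn mulfK //; exact: expf_neq0.
Qed.

Lemma Mp_g t N f mm : t != 0 ->
  Mp (gsc t N f) mm = t ^+ (N * udeg mm + wt mm)%N *: sig t (Mp f mm).
Proof.
move=> ht; rewrite /Mp.
under eq_bigr do rewrite V_g // exprZn -exprM.
rewrite scaler_prod prodrXr /sig rmorph_prod.
congr (t ^+ _ *: _); last by apply: eq_bigr => i _; rewrite rmorphXn.
rewrite (bigD1 ord0) //= mul1n /wt /udeg [RHS]addnCA; congr (_ + _)%N.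
rewrite big_distrr /= -big_split /=.
apply: eq_big => [[[|j] hj]|[[|j] hj]] //= _; by rewrite mulnDl.
Qed.

Lemma size_sigX t : t != 0 -> size (t^-1 *: 'X : {poly R}) = 2%N.
Proof. by move=> ht; rewrite size_scale ?invr_eq0 // size_polyX. Qed.

Lemma size_gsc t N (f : {poly R}) : t != 0 -> (size f <= n.+1)%N -> (size (gsc t N f) <= n.+1)%N.
Proof.
move=> ht hf; apply: (leq_trans (size_scale_leq _ _)).
apply: (leq_trans (size_scale_leq _ _)).
by rewrite /sig size_comp_poly2 // size_sigX.
Qed.

Lemma scaled (T : {mpoly R[n.+2]}) m (f : {poly R}) (t : R) N :
  (forall g : {poly R}, (size g <= n.+1)%N -> inPs m (act T g)) ->
  (size f <= n.+1)%N -> t != 0 ->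
  (size (\sum_(mm <- msupp T) (T@_mm * t ^+ (N * udeg mm + wt mm)%N) *: Mp f mm)%R <= m.+1)%N.
Proof.
move=> H hf ht.
have [q [hq E]] := H _ (@size_gsc t N f ht hf).
have : (size (\sum_(mm <- msupp T) T@_mm *: Mp (gsc t N f) mm)%R <= m.+1)%N.
  by apply: inPs_size; exists q; split => // x; rewrite -E actE.
have -> : \sum_(mm <- msupp T) T@_mm *: Mp (gsc t N f) mm =
   sig t (\sum_(mm <- msupp T) (T@_mm * t ^+ (N * udeg mm + wt mm)%N) *: Mp f mm).
  rewrite /sig raddf_sum; apply: eq_bigr => mm _.
  by rewrite Mp_g // scalerA /= comp_polyZ.
by rewrite /sig size_comp_poly2 ?size_sigX.
Qed.

End S.

Theorem mainTheorem7 (R : realType) (n m : nat) (T : {mpoly R[n.+2]}) :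
  (1 <= n)%N ->
  (forall f : {poly R}, (size f <= n.+1)%N -> inPs m (act T f)) ->
  forall l k : nat,
  forall f : {poly R}, (size f <= n.+1)%N -> inPs m (act (Tpart T l k) f).
Proof.
move=> _ H l k f hf.
set N := (k.+1 + \max_(mm <- msupp T) wt mm)%N.
exists (\sum_(mm <- msupp T | (udeg mm == l) && (wt mm == k)) T@_mm *: Mp R n f mm).
split; last by move=> x; rewrite act_Tpart.
apply/leq_sizeP => j hj.
pose e := fun mm : 'X_{1..n.+2} => (N * udeg mm + wt mm)%N.
pose Pj := \sum_(mm <- msupp T) (T@_mm * (Mp R n f mm)`_j) *: 'X^(e mm).
have P0 : Pj = 0.
  apply: poly_zero_nz => t ht.
  rewrite horner_sum.
  have := @scaled _ _ T m f t N H hf ht => /leq_sizeP /(_ j hj); rewrite coef_sum => hS; rewrite -[RHS]hS.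
  by apply: eq_bigr => mm _; rewrite hornerZ hornerXn coefZ mulrAC.
have := congr1 (fun p : {poly R} => p`_(N * l + k)%N) P0; rewrite coef0 coef_sum /= => E.
rewrite coef_sum -[RHS]E big_mkcond /=; apply: eq_big_seq => mm hmm.
rewrite !coefZ coefXn /e divmod_eq.
- by rewrite (eq_sym l) (eq_sym k); case: (_ && _); rewrite ?mulr1 ?mulr0.
- by rewrite /N ltnS leq_addr.
- rewrite /N addSn ltnS; apply: (leq_trans _ (leq_addl _ _)).
  exact: (@leq_bigmax_seq _ _ predT).
Qed.
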